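(* Let $(X,+,d)$ be an Abelian metric group with translation-invariant metric $d$ such that every non-empty open ball in $X$ contains infinitely many elements. Then (i) the family $\{A\subset X:\ A\text{ is finite and } S(A)\neq\{0\}\}$ is dense in $K(X)$; (ii) the family $NT(X)$ is dense in $K(X)$.
   Context: $d$ satisfies $d(x,y)=d(x+z,y+z)$ for all $x,y,z\in X$; $0$ is the neutral element. $K(X)$ is the family of non-empty compact subsets of $X$ with the Pompeiu–Hausdorff metric $d_H(A,B)=\max\{\sup_{a\in A}d(a,B),\sup_{b\in B}d(A,b)\}$. The spectre of $A\subset X$ is $S(A):=\{z\in X:\ \forall_{a\in A}\ (a+z\in A \text{ or } a-z\in A)\}$. A set $A\subset X$ is a net-set if it is finite, has at least three elements, and for every pair of distinct two-element subsets $\{z,t\}\neq\{u,v\}$ of $A$ we have $\{z-t,t-z\}\cap\{v-u,u-v\}=\emptyset$; $NT(X)$ is the family of all net-sets. *)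

(* Defs.v *)
From HB Require Import structures.
From mathcomp Require Import all_boot all_order all_algebra.
From mathcomp Require Import all_classical all_reals.
Set Implicit Arguments. Unset Strict Implicit. Unset Printing Implicit Defensive.
Import Order.TTheory GRing.Theory Num.Theory.
Local Open Scope classical_set_scope.
Local Open Scope ring_scope.

Section Defs.
Variables (R : realType) (X : zmodType) (d : X -> X -> R).

Definition is_metric : Prop :=
  [/\ (forall x y, 0 <= d x y),
      (forall x y, d x y = 0 <-> x = y),
      (forall x y, d x y = d y x) &
      (forall x y z, d x z <= d x y + d y z)].

Definition translation_invariant : Prop :=
  forall x y z, d x y = d (x + z) (y + z).

Definition dball (c : X) (r : R) : set X := [set y | d c y < r].

Definition dopen (U : set X) : Prop :=
  forall x, U x -> exists2 r : R, 0 < r & dball x r `<=` U.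

Definition dcompact (A : set X) : Prop :=
  forall (I : Type) (U : I -> set X), (forall i, dopen (U i)) ->
    A `<=` \bigcup_(i in [set: I]) U i ->
    exists F : set I, finite_set F /\ A `<=` \bigcup_(i in F) U i.

Definition KX (A : set X) : Prop := A !=set0 /\ dcompact A.

Definition dpt_set (x : X) (B : set X) : R := inf [set d x b | b in B].

Definition dH (A B : set X) : R :=
  Num.max (sup [set dpt_set a B | a in A]) (sup [set dpt_set b A | b in B]).

Definition spectre (A : set X) : set X :=
  [set z | forall a, A a -> A (a + z) \/ A (a - z)].

Definition net_set (A : set X) : Prop :=
  [/\ finite_set A,
      (exists x y z, [/\ A x, A y & A z] /\ [/\ x <> y, y <> z & x <> z]) &
      (forall z t u v, A z -> A t -> A u -> A v -> z <> t -> u <> v ->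
         ~ ((z = u /\ t = v) \/ (z = v /\ t = u)) ->
         [/\ z - t <> v - u, z - t <> u - v, t - z <> v - u & t - z <> u - v])].

Definition dense_in_KX (F : set X -> Prop) : Prop :=
  forall K, KX K -> forall e : R, 0 < e ->
    exists A, [/\ F A, KX A & dH K A < e].

End Defs.

(* Main.v *)
Require Import Defs.
From HB Require Import structures.
From mathcomp Require Import all_boot all_order all_algebra.
From mathcomp Require Import all_classical all_reals.
From mathcomp Require Import lra zify.
Import Order.TTheory GRing.Theory Num.Theory.
Local Open Scope classical_set_scope.
Local Open Scope ring_scope.
Definition Sid (X : zmodType) (S : seq X) := forall a b c e,
  a \in S -> b \in S -> c \in S -> e \in S -> a + b = c + e ->
  [\/ a = c /\ b = e, a = e /\ b = c | a = b /\ c = e].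
Arguments Sid {X}.

Definition Cen (X : zmodType) (cs S : seq X) := forall b c g,
  b \in S -> c \in S -> b <> c -> g \in cs -> b + c <> g + g.
Arguments Cen {X}.

Lemma sid_step (X : zmodType) (cs S : seq X) x : Sid S -> Cen cs S -> x \notin S ->
  (forall a b c, a \in S -> b \in S -> c \in S -> x + a <> b + c) ->
  (forall b c, b \in S -> c \in S -> b <> c -> x + x <> b + c) ->
  (forall g b, g \in cs -> b \in S -> x + b <> g + g) ->
  Sid (x :: S) /\ Cen cs (x :: S).
Proof.
move=> hS hC xS h1 h3 h4; split.
  move=> a b c e; rewrite !in_cons.
  have xn : forall y, y \in S -> y = x -> False by move=> y yS yx; rewrite -yx yS in xS.
  case/orP => [/eqP-> | aS]; case/orP => [/eqP-> | bS];
  case/orP => [/eqP-> | cS]; case/orP => [/eqP-> | eS] => E.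
  - by constructor 1.
  - by exfalso; move/addrI: E => /esym; apply: xn.
  - by exfalso; move/addIr: E => /esym; apply: xn.
  - case: (eqVneq c e) => [->|ce]; first by constructor 3.
    by exfalso; apply: (h3 c e) => //; apply/eqP.
  - by exfalso; move/addrI: E; apply: xn.
  - by constructor 1; split => //; apply: addrI E.
  - by constructor 2; split => //; apply: (@addrI _ x); rewrite E addrC.
  - by exfalso; apply: (h1 b c e).
  - by exfalso; move/addIr: E; apply: xn.
  - by constructor 2; split => //; apply: (@addIr _ x); rewrite E addrC.
  - by constructor 1; split => //; apply: addIr E.
  - by exfalso; apply: (h1 a c e) => //; rewrite addrC.
  - case: (eqVneq a b) => [->|ab]; first by constructor 3.
    by exfalso; apply: (h3 a b) => //; apply/eqP.
  - by exfalso; apply: (h1 e a b) => //.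
  - by exfalso; apply: (h1 c a b) => //; rewrite addrC.
  - exact: hS.
move=> b c g; rewrite !in_cons.
case/orP => [/eqP-> | bS]; case/orP => [/eqP-> | cS] => bc gc //.
- exact: h4.
- by rewrite addrC; apply: h4.
- exact: hC.
Qed.

Section H.
Variables (R : realType) (X : zmodType) (d : X -> X -> R).
Hypothesis hm : is_metric d.
Hypothesis ht : translation_invariant d.
Hypothesis hinf : forall (c : X) (r : R), dball d c r !=set0 -> infinite_set (dball d c r).

Lemma d_ge0 x y : 0 <= d x y. Proof. by case: hm. Qed.
Lemma d_xx x : d x x = 0. Proof. by case: hm => _ H _ _; exact: (proj2 (H x x) erefl). Qed.
Lemma d_sym x y : d x y = d y x. Proof. by case: hm. Qed.
Lemma d_tri x y z : d x z <= d x y + d y z. Proof. by case: hm. Qed.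
Lemma d_eq0 x y : d x y = 0 -> x = y. Proof. by case: hm => _ H _ _; exact: (proj1 (H x y)). Qed.

Lemma d_shift0 f s : d f (s + f) = d 0 s.
Proof. by rewrite (ht 0 s f) add0r. Qed.

Lemma ball_notin f r (s : seq X) : 0 < r -> exists x, d f x < r /\ x \notin s.
Proof.
move=> r0; have hb : dball d f r !=set0 by exists f; rewrite /dball /= d_xx.
have := hinf f r hb; apply: contra_notP => H; apply: (sub_finite_set _ (finite_seq s)).
move=> x /= hx; apply: contrapT => hn; apply: H; exists x; split => //; exact/negP.
Qed.

Lemma minpos (t : seq X) : exists2 eta : R, 0 < eta &
  forall c, c \in t -> c != 0 -> eta <= d 0 c.
Proof.
elim: t => [|a t [eta e0 IH]]; first by exists 1 => //.
case: (eqVneq a 0) => [->|a0].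
  exists eta => // c; rewrite in_cons => /orP[/eqP->|]; first by rewrite eqxx.
  exact: IH.
have da : 0 < d 0 a.
  rewrite lt_neqAle d_ge0 andbT; apply/eqP => /esym/d_eq0 h; by rewrite -h eqxx in a0.
exists (Num.min eta (d 0 a)); first by rewrite lt_min e0 da.
move=> c; rewrite in_cons => /orP[/eqP->|ct] c0; first by rewrite ge_min lexx orbT.
by rewrite ge_min IH.
Qed.

Lemma dbl_dich : ~ (exists2 d0 : R, 0 < d0 & forall s, d 0 s < d0 -> s + s = 0) ->
  forall r : R, 0 < r -> infinite_set [set s + s | s in dball d 0 r].
Proof.
move=> nA r r0 /finite_seqP [t ht'].
have [eta e0 He] := minpos t.
apply: nA; exists (Num.min r (eta / 2)); first by rewrite lt_min r0 divr_gt0.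
move=> s; rewrite lt_min => /andP[sr se]; apply: contrapT => /eqP ss.
have : [set s + s | s in dball d 0 r] (s + s) by exists s.
rewrite ht' /= => /He /(_ ss) h.
have : d 0 (s + s) <= d 0 s + d 0 s.
  by rewrite -{2}(d_shift0 s s); apply: d_tri.
move=> h2; have : d 0 s + d 0 s < eta.
  by rewrite -(@mulr2n R) -mulr_natr -ltr_pdivlMr // mulrC.
by move=> h3; have := le_lt_trans (le_trans h h2) h3; rewrite ltxx.
Qed.


Lemma pick f (r : R) (P C : seq X) : 0 < r -> (f + f) \notin C ->
  exists x, [/\ d f x < r, x \notin P & (x + x) \notin C].
Proof.
move=> r0 fC.
case: (pselect (exists2 d0 : R, 0 < d0 & forall s, d 0 s < d0 -> s + s = 0)).
  move=> [d0 d00 Hd].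
  have [x [hx xP]] := @ball_notin f (Num.min r d0) P ltac:(by rewrite lt_min r0 d00).
  move: hx; rewrite lt_min => /andP[hr hd].
  exists x; split => //.
  have : (x - f) + (x - f) = 0 by apply: Hd; rewrite -(d_shift0 f) subrK.
  by rewrite addrACA -opprD => /eqP; rewrite subr_eq0 => /eqP ->.
move=> nA; have inf2 := @dbl_dich nA r r0.
pose T := [seq c - (f + f) | c <- C] ++ [seq p + p - (f + f) | p <- P].
have [w [[s hs <-] wT]] :
    exists w, [set s + s | s in dball d 0 r] w /\ ~ [set` T] w.
  apply: contrapT => H; apply: inf2; apply: (sub_finite_set _ (finite_seq T)).
  by move=> w hw; apply: contrapT => hn; apply: H; exists w.
exists (s + f); split.
- by rewrite d_shift0.
- apply/negP => sP; apply: wT; rewrite /= mem_cat; apply/orP; right.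
  apply/mapP; exists (s + f) => //; rewrite addrACA addrK //.
- apply/negP => sC; apply: wT; rewrite /= mem_cat; apply/orP; left.
  apply/mapP; exists (s + f + (s + f)) => //; rewrite addrACA addrK //.
Qed.


Lemma step (cs S : seq X) f r : 0 < r -> f \in cs -> Sid S -> Cen cs S ->
  exists x, [/\ d f x < r, x \notin S, Sid (x :: S) & Cen cs (x :: S)].
Proof.
move=> r0 fcs hS hC.
pose P := S ++ [seq bc - a | a <- S, bc <- [seq b + c | b <- S, c <- S]]
            ++ [seq g + g - b | g <- cs, b <- S].
pose C := [seq b + c | b <- S, c <- [seq y <- S | y != b]].
have fC : (f + f) \notin C.
  apply/negP => /allpairsPdep [b [c [bS]]]; rewrite mem_filter => /andP[cb cS] E.
  apply: (hC b c f bS cS _ fcs (esym E)) => h; by rewrite h eqxx in cb.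
have [x [hx xP xC]] := @pick f r P C r0 fC.
have xS : x \notin S by apply: contra xP; rewrite mem_cat => ->.
have [] := @sid_step X cs S x hS hC xS.
- move=> a b c aS bS cS E; move/negP: xP; apply; rewrite !mem_cat; apply/orP; right.
  apply/orP; left; apply/allpairsP; exists (a, b + c); split => //=.
    exact: allpairs_f.
  by rewrite -E addrK.
- move=> b c bS cS bc E; move/negP: xC; apply; rewrite E.
  apply: allpairs_f_dep => //; rewrite mem_filter cS andbT; apply/eqP => h; exact: bc.
- move=> g b gS bS E; move/negP: xP; apply; rewrite !mem_cat; apply/orP; right.
  apply/orP; right; apply/allpairsP; exists (g, b); split => //=.
  by rewrite -E addrK.
- by move=> h1 h2; exists x.
Qed.

Lemma build r (cs0 : seq X) : 0 < r -> forall cs, {subset cs <= cs0} ->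
  exists xs, [/\ uniq xs, Sid xs, Cen cs0 xs, size xs = size cs &
    [/\ (forall f, f \in cs -> exists2 x, x \in xs & d f x < r) &
    (forall x, x \in xs -> exists2 f, f \in cs & d f x < r)]].
Proof.
move=> r0; elim => [|f cs IH] sub.
  by exists [::]; split => //.
have [|xs [u hS hC sz [H1 H2]]] := IH.
  by move=> y yc; apply: sub; rewrite in_cons yc orbT.
have [x [hx xS hS' hC']] := @step cs0 xs f r r0 (sub f (mem_head _ _)) hS hC.
exists (x :: xs); split => //=.
- by rewrite xS.
- by rewrite sz.
split.
- move=> g; rewrite in_cons => /orP[/eqP->|gc]; first by exists x => //; exact: mem_head.
  by have [y ys hy] := H1 g gc; exists y => //; rewrite in_cons ys orbT.
- move=> y; rewrite in_cons => /orP[/eqP->|ys]; first by exists f => //; exact: mem_head.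
  by have [g gs hg] := H2 y ys; exists g => //; rewrite in_cons gs orbT.
Qed.


Lemma dH_le (K A : set X) (r : R) : K !=set0 -> A !=set0 ->
  (forall a, K a -> exists2 x, A x & d a x <= r) ->
  (forall x, A x -> exists2 a, K a & d x a <= r) -> dH d K A <= r.
Proof.
move=> [k Kk] [y Ay] H1 H2; rewrite /dH ge_max; apply/andP; split; apply: ge_sup.
- by exists (dpt_set d k A); exists k.
- move=> _ [a Ka <-]; have [x Ax hx] := H1 a Ka; apply: le_trans hx.
  apply: ge_inf; last by exists x.
  by exists 0 => _ [b _ <-]; exact: d_ge0.
- by exists (dpt_set d y K); exists y.
- move=> _ [a Ka <-]; have [x Ax hx] := H2 a Ka; apply: le_trans hx.
  apply: ge_inf; last by exists x.
  by exists 0 => _ [b _ <-]; exact: d_ge0.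
Qed.

Lemma fin_compact (s : seq X) : dcompact d [set` s].
Proof.
move=> I U _; elim: s => [|a s IH] cov.
  by exists set0; split; [exact: finite_set0 | move=> x].
have [|F [fF sF]] := IH.
  by move=> x xs; apply: cov; rewrite /= in_cons xs orbT.
have [i _ Ui] := cov a (mem_head a s).
exists ([set i] `|` F); split.
  by rewrite finite_setU; split => //; exact: finite_set1.
move=> x; rewrite /= in_cons => /orP[/eqP->|xs]; first by exists i => //; left.
by have [j Fj Uj] := sF x xs; exists j => //; right.
Qed.

Lemma net (K : set X) r : KX d K -> 0 < r -> exists cs : seq X,
  [/\ cs != [::], (forall f, f \in cs -> K f) &
      (forall a, K a -> exists2 f, f \in cs & d f a < r)].
Proof.
move=> [[a0 Ka0] hc] r0.
pose U f := [set y | K f /\ d f y < r].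
have oU : forall f, dopen d (U f).
  move=> f y [Kf hy]; exists (r - d f y); first by rewrite subr_gt0.
  move=> z; rewrite /dball /= => hz; split => //.
  by have := d_tri f y z; lra.
have cov : K `<=` \bigcup_(i in [set: X]) U i.
  by move=> a Ka; exists a => //; split => //; rewrite d_xx.
have [F [fF KF]] := hc X U oU cov.
move/finite_seqP: fF => [s hs].
have H : forall a, K a -> exists2 f, f \in [seq f <- s | `[< K f >]] & d f a < r.
  move=> a Ka; have [f Ff [Kf hf]] := KF a Ka.
  by exists f => //; rewrite mem_filter; apply/andP; split; [apply/asboolP | rewrite hs in Ff].
exists [seq f <- s | `[< K f >]]; split => //.
- by have [f fin _] := H a0 Ka0; apply/eqP => h; rewrite h in fin.
- by move=> f; rewrite mem_filter => /andP[/asboolP].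
Qed.

End H.
Arguments net {R X d}.
Arguments ball_notin {R X d}.
Arguments build {R X d}.
Arguments dH_le {R X d}.
Arguments fin_compact {R X d}.
Arguments d_sym {R X d}.
Arguments d_xx {R X d}.
Arguments d_shift0 {R X d}.
Arguments d_tri {R X d}.

Lemma subeq (X : zmodType) (a b c e : X) : a - b = c - e -> a + e = c + b.
Proof. by move=> h; rewrite -[a](subrK b) h addrAC subrK. Qed.

Lemma sid_net (X : zmodType) (xs : seq X) : uniq xs -> Sid xs -> (2 < size xs)%N ->
  net_set [set` xs].
Proof.
move=> u hS sz; split.
- exact: finite_seq.
- have mn : forall i, (i < size xs)%N -> [set` xs] (nth 0 xs i).
    by move=> i hi; apply: mem_nth.
  exists (nth 0 xs 0), (nth 0 xs 1), (nth 0 xs 2); split.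
    have s0 : (0 < size xs)%N by apply: leq_trans sz.
    have s1 : (1 < size xs)%N by apply: leq_trans sz.
    by split; apply: mn.
  have s0 : (0 < size xs)%N by apply: leq_trans sz.
  have s1 : (1 < size xs)%N by apply: leq_trans sz.
  by split => /eqP; rewrite nth_uniq.
move=> z t u' v zS tS uS vS zt uv nE; split => /subeq E.
- by have := hS _ _ _ _ zS uS vS tS E; case => [[? ?]|[? ?]|[? ?]]; subst; tauto.
- by have := hS _ _ _ _ zS vS uS tS E; case => [[? ?]|[? ?]|[? ?]]; subst; tauto.
- by have := hS _ _ _ _ tS uS vS zS E; case => [[? ?]|[? ?]|[? ?]]; subst; tauto.
- by have := hS _ _ _ _ tS vS uS zS E; case => [[? ?]|[? ?]|[? ?]]; subst; tauto.
Qed.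

Theorem lemma3p6 (R : realType) (X : zmodType) (d : X -> X -> R) :
  is_metric d -> translation_invariant d ->
  (forall (c : X) (r : R), dball d c r !=set0 -> infinite_set (dball d c r)) ->
  dense_in_KX d (fun A => finite_set A /\ spectre A <> [set 0]) /\
  dense_in_KX d (net_set (X:=X)).
Proof.
move=> hm ht hinf; split.
  move=> K hK e e0.
  have d0 : 0 < e / 2 by rewrite divr_gt0.
  have [cs [cne csK Kcs]] := net hm K _ hK d0.
  have [f0 f0c] : exists f, f \in cs.
    by case: cs cne {csK Kcs} => // f cs _; exists f; rewrite mem_head.
  have [z [hz zn]] := ball_notin hm hinf 0 _ [:: 0] d0.
  pose A := [set` cs ++ map (fun f => f + z) cs].
  exists A; split.
  - split; first exact: finite_seq.
    move=> H; have : spectre A z.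
      move=> a; rewrite /A /= mem_cat => /orP[ac|am].
        by left; rewrite mem_cat (map_f (fun f => f + z)) ?orbT.
      by right; move/mapP: am => [f fc ->]; rewrite addrK mem_cat fc.
    by rewrite H /= => zeq; rewrite zeq mem_head in zn.
  - split; last exact: fin_compact.
    by exists f0; rewrite /A /= mem_cat f0c.
  - apply: (@le_lt_trans _ _ (e / 2)); last by lra.
    apply: dH_le => //; first by case: hK.
    + by exists f0; rewrite /A /= mem_cat f0c.
    + move=> a Ka; have [f fc hf] := Kcs a Ka; exists f.
        by rewrite /A /= mem_cat fc.
      by rewrite (d_sym hm); apply: ltW.
    + move=> x; rewrite /A /= mem_cat => /orP[xc|xm].
        by exists x; [exact: csK | rewrite (d_xx hm) ltW].
      move/mapP: xm => [f fc ->]; exists f; first exact: csK.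
      by rewrite (d_sym hm) addrC (d_shift0 ht) ltW.
move=> K hK e e0.
have d0 : 0 < e / 3 by rewrite divr_gt0.
have [cs [cne csK Kcs]] := net hm K _ hK d0.
pose cs3 := cs ++ cs ++ cs.
have [xs [u hS hC sz [H1 H2]]] := build hm ht hinf _ cs3 d0 cs3 (fun x h => h).
have s3 : (2 < size xs)%N.
  have s0 : (0 < size cs)%N by case: (cs) cne.
  rewrite sz /cs3 !size_cat; move: s0; case: (size cs) => // n _.
  by rewrite !addSn !addnS.
have mem3 : forall f, f \in cs3 = (f \in cs) by move=> f; rewrite /cs3 !mem_cat !orbb.
exists [set` xs]; split.
- exact: sid_net.
- split; last exact: fin_compact.
  by exists (nth 0 xs 0); rewrite /= mem_nth //; apply: leq_trans s3.
- apply: (@le_lt_trans _ _ (e / 3 + e / 3)); last by lra.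
  apply: dH_le => //; first by case: hK.
  + by exists (nth 0 xs 0); rewrite /= mem_nth //; apply: leq_trans s3.
  + move=> a Ka; have [f fc hf] := Kcs a Ka.
    have [x xs' hx] := H1 f ltac:(by rewrite mem3).
    exists x => //; apply: le_trans (d_tri hm a f x) _.
    by rewrite (d_sym hm); apply: lerD; apply: ltW.
  + move=> x xs'; have [f fc hf] := H2 x xs'.
    exists f; first by apply: csK; rewrite -mem3.
    rewrite (d_sym hm); apply: ltW; apply: (lt_le_trans hf).
    by rewrite lerDl ltW.
Qed.
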